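(* Let $r\ge-1$ be an integer and $m\ge1$. Let $\beta_r(m,q)=\sum q^{|\pi|}$, summed over all partitions $\pi$ with $n$ copies of $n$ having exactly $m$ parts, whose lexicographically smallest part is of the form $i_i$ for some $i\ge1$, and such that, with parts listed in ascending lexicographic order, the weighted difference of each part and the preceding one is exactly $r$. Then $$\beta_r(m,q)=\frac{q^{m^2+r\binom m2}}{(q;q^2)_m}.$$
   Context: $M=\{m_i: 1\le i\le m\}$; a partition with $n$ copies of $n$ is a finite multiset of elements of $M$, and $|\pi|$ is the sum of the values (first entries) of its parts. Lexicographic order: $m_i>n_j$ iff $m>n$, or $m=n$ and $i>j$. Weighted difference $((m_i-n_j))=m-n-i-j$; ''successive weighted difference'' of consecutive parts $n_j\le m_i$ in ascending order means $((m_i-n_j))$. $(a;q)_m=\prod_{j=0}^{m-1}(1-aq^j)$. *)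

(* Defs.v *)
From HB Require Import structures.
From mathcomp Require Import all_boot all_order all_algebra.
Set Implicit Arguments. Unset Strict Implicit. Unset Printing Implicit Defensive.
Import Order.TTheory GRing.Theory Num.Theory.

(* A part m_i of a partition with n copies of n is the pair (m, i), 1 <= i <= m. *)
Definition part := (nat * nat)%type.
Definition valid_part (p : part) : bool := (1 <= p.2 <= p.1)%N.

Definition lexle (p p' : part) : bool :=
  (p.1 < p'.1)%N || ((p.1 == p'.1) && (p.2 <= p'.2)%N).

Definition wdiff (a b : part) : int :=
  (a.1%:Z - b.1%:Z - a.2%:Z - b.2%:Z)%R.

Definition weight (s : seq part) : nat := \sum_(p <- s) p.1.

(* A partition with n copies of n (a finite multiset of parts) is represented by
   the list of its parts in ascending lexicographic order (bijective encoding).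
   beta_part r m s : s has exactly m parts, all valid, listed in ascending lex order,
   the smallest part is of the form i_i (i >= 1), and each consecutive
   weighted difference equals r. *)
Definition beta_part (r : int) (m : nat) (s : seq part) : bool :=
  [&& size s == m,
      all valid_part s,
      sorted lexle s,
      (let p := head (0%N, 0%N) s in p.1 == p.2) &
      sorted (fun x y => wdiff y x == r) s].

(* Coefficient of q^N in beta_r(m,q): number of such partitions with |pi| = N.
   Every part of such a partition has value <= N (values are >= 1), hence
   both entries of every part are < N.+1, so enumerating m-tuples over
   'I_N.+1 * 'I_N.+1 lists each such partition exactly once. *)
Definition tuple_parts (N m : nat) (t : m.-tuple ('I_N.+1 * 'I_N.+1)) : seq part :=
  map (fun p => (nat_of_ord p.1, nat_of_ord p.2)) t.

Definition beta_coef (r : int) (m N : nat) : nat :=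
  #|[set t : m.-tuple ('I_N.+1 * 'I_N.+1) |
       beta_part r m (tuple_parts t) && (weight (tuple_parts t) == N)]|.

Definition qq2_poch (m : nat) : {poly int} :=
  (\prod_(j < m) (1 - 'X^(2 * j + 1)))%R.

(* Main.v *)
Require Import Defs.
From HB Require Import structures.
From mathcomp Require Import all_boot all_order all_algebra zify ring.
Import Order.TTheory GRing.Theory Num.Theory.
Set Implicit Arguments. Unset Strict Implicit.

Definition W m j := (2 * (m.-1 - j)).+1.
Arguments W : simpl never.
Definition Fs (a : nat -> nat) j := \sum_(l < j) a l.
Definition V s (a : nat -> nat) j := (2 * Fs a j + a j + 1 + j * s.+1)%N.
Definition e m s := (m + s.+1 * 'C(m,2))%N.

Lemma Vrec s a j : V s a j.+1 = (V s a j + a j + a j.+1 + s.+1)%N.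
Proof. rewrite /V /Fs big_ord_recr /= mulSn; lia. Qed.

Lemma sumDn m (F G : 'I_m -> nat) :
  \sum_(i<m) (F i + G i) = (\sum_(i<m) F i + \sum_(i<m) G i)%N.
Proof. by rewrite big_split. Qed.
Lemma sumMn m c (F : 'I_m -> nat) :
  \sum_(i<m) (c * F i) = (c * \sum_(i<m) F i)%N.
Proof. by rewrite big_distrr. Qed.
Lemma sumMnr m c (F : 'I_m -> nat) :
  \sum_(i<m) (F i * c) = ((\sum_(i<m) F i) * c)%N.
Proof. by rewrite big_distrl. Qed.

Lemma sum1n m : \sum_(i<m) 1 = m.
Proof. by rewrite -[RHS]card_ord -sum1_card. Qed.

Lemma sumW m a : \sum_(j<m) (2 * Fs a j + a j) = \sum_(j<m) W m j * a j.
Proof.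
elim: m => [|m IH]; first by rewrite !big_ord0.
rewrite big_ord_recr IH [RHS]big_ord_recr /=.
rewrite [X in _ = X + _](eq_bigr (fun j : 'I_m => W m j * a j + 2 * a j)%N); last first.
  by move=> j _; rewrite /W /=; have := ltn_ord j; nia.
rewrite [in RHS]sumDn [in RHS]sumMn /Fs /W /=; lia.
Qed.

Lemma sumV m s a : \sum_(j<m) V s a j = (\sum_(j<m) W m j * a j + e m s)%N.
Proof.
rewrite -sumW /V /e.
rewrite (eq_bigr (fun j : 'I_m => (2 * Fs a j + a j) + (1 + j * s.+1))%N); last by move=> j _; lia.
rewrite [LHS]sumDn [X in _ + X = _]sumDn sum1n sumMnr.
rewrite -(big_mkord xpredT (fun i => i)) -bin2_sum; lia.
Qed.
Lemma beta_mk s m a :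
  beta_part (s%:Z - 1) m (mkseq (fun j => (V s a j, (a j).+1)) m).
Proof.
apply/and5P; split.
- by rewrite size_mkseq.
- apply/allP => p /mapP [j _ ->]; rewrite /valid_part /= /V; lia.
- apply/(sortedP (0,0)%N) => i; rewrite size_mkseq => hi.
  rewrite !nth_mkseq //; last by lia.
  by rewrite /lexle /= Vrec; apply/orP; left; lia.
- case: m => [|m] //=; rewrite /V /Fs big_ord0; apply/eqP; lia.
- apply/(sortedP (0,0)%N) => i; rewrite size_mkseq => hi.
  rewrite !nth_mkseq //; last by lia.
  rewrite /wdiff /= Vrec; apply/eqP; lia.
Qed.

Lemma beta_char s p : beta_part (s%:Z - 1) (size p) p ->
  forall j, (j < size p)%N ->
  nth (0,0)%N p j = (V s (fun l => (nth (0,0)%N p l).2 - 1) j,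
                     ((nth (0,0)%N p j).2 - 1).+1)%N.
Proof.
case/and5P => _ /allP val _ hd /(sortedP (0,0)%N) srt.
set a := fun l => _.
have va : forall j, (j < size p)%N -> (0 < (nth (0,0)%N p j).2)%N.
  move=> j hj; have /val := mem_nth (0,0)%N hj; rewrite /valid_part; by case/andP.
elim=> [|j IH] hj.
  have := va 0%N hj; move: hd; rewrite /V /Fs big_ord0 /a -nth0.
  case: (nth _ p 0) => x y /= /eqP ->; move=> hy; congr pair; lia.
have := IH (ltnW hj); have := srt j hj; have := va j (ltnW hj); have := va _ hj.
rewrite Vrec /a; case: (nth _ p j) => x y; case: (nth _ p j.+1) => x' y'.
rewrite /wdiff /= => h1 h2 /eqP h3 [hx _]; congr pair; lia.
Qed.

Lemma weight_mkseq (F : nat -> part) m : weight (mkseq F m) = \sum_(j<m) (F j).1.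
Proof. rewrite /weight /mkseq big_map (_ : iota 0 m = index_iota 0 m); first by rewrite big_mkord. by rewrite /index_iota subn0. Qed.

Lemma V_ext s a b m j : (forall l, (l < m)%N -> a l = b l) -> (j < m)%N -> V s a j = V s b j.
Proof.
move=> h hj; rewrite /V /Fs (h j hj); congr (_ + _ + _ + _)%N; congr (2 * _)%N.
apply: eq_bigr => l _; apply: h; exact: ltn_trans (ltn_ord l) hj.
Qed.

Lemma tuple_parts_inj N m : injective (@tuple_parts N m).
Proof.
move=> t1 t2 h; apply: val_inj; apply: (inj_map _ h).
by case=> [x1 y1] [x2 y2] [/val_inj -> /val_inj ->].
Qed.

Lemma parts_bound N m (t : m.-tuple ('I_N.+1 * 'I_N.+1)) k :
  ((nth (0,0)%N (tuple_parts t) k).2 <= N)%N.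
Proof.
case: (ltnP k (size (tuple_parts t))) => hk; last by rewrite nth_default.
rewrite /tuple_parts (nth_map (ord0, ord0)) /=; last by move: hk; rewrite size_map.
by rewrite -ltnS ltn_ord.
Qed.

Section Count.
Variables (s M n Kp : nat).
Local Notation K := Kp.+1.
Hypothesis hK : (n < K)%N.

Definition fn (f : {ffun 'I_M.+1 -> 'I_K}) (j : nat) : nat := f (inord j).

Definition gt (f : {ffun 'I_M.+1 -> 'I_K}) : M.+1.-tuple ('I_n.+1 * 'I_n.+1) :=
  [tuple (inord (V s (fn f) j), inord (fn f j).+1) | j < M.+1].

Definition Bset := [set f : {ffun 'I_M.+1 -> 'I_K} |
   (\sum_(j : 'I_M.+1) W M.+1 j * f j + e M.+1 s == n)%N].

Lemma sumWf (f : {ffun 'I_M.+1 -> 'I_K}) : \sum_(j : 'I_M.+1) W M.+1 j * f j = \sum_(j < M.+1) W M.+1 j * fn f j.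
Proof. by apply: eq_bigr => j _; rewrite /fn inord_val. Qed.

Lemma gt_parts (f : {ffun 'I_M.+1 -> 'I_K}) : f \in Bset ->
  tuple_parts (gt f) = mkseq (fun j => (V s (fn f) j, (fn f j).+1)) M.+1.
Proof.
rewrite inE sumWf -sumV => /eqP hs.
have hV : forall i, (i < M.+1)%N -> (V s (fn f) i <= n)%N.
  move=> i hi; rewrite -hs (bigD1 (Ordinal hi)) //=; exact: leq_addr.
apply: (@eq_from_nth _ (0,0)%N); first by rewrite size_map size_tuple size_mkseq.
move=> i; rewrite size_map size_tuple => hi.
rewrite (nth_map (ord0, ord0)) ?size_tuple // nth_mkseq //.
rewrite (_ : i = Ordinal hi) // nth_mktuple /=.
have := hV i hi; rewrite /V => h.
by rewrite !inordK //; lia.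
Qed.

Lemma count_beta : beta_coef (s%:Z - 1) M.+1 n = #|Bset|.
Proof.
rewrite /beta_coef -(card_in_imset (f := gt)).
  apply: eq_card => t; rewrite inE; apply/idP/imsetP.
  - case/andP => hb /eqP hw.
    set p := tuple_parts t.
    have hsz : size p = M.+1 by rewrite size_map size_tuple.
    have hb' : beta_part (s%:Z - 1) (size p) p by rewrite hsz.
    have hc := beta_char hb'.
    set a := fun l => _ in hc.
    have ha : forall k, (k < M.+1)%N -> (a k < K)%N.
      move=> k hk; rewrite /a /p; have := parts_bound t k.
      move=> h; exact: leq_ltn_trans (leq_subr _ _) (leq_ltn_trans h hK).
    pose f := [ffun k : 'I_M.+1 => (inord (a k) : 'I_K)].
    have hfa : forall l, (l < M.+1)%N -> fn f l = a l.
      by move=> l hl; rewrite /fn ffunE !inordK // ha.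
    have hp : p = mkseq (fun j => (V s (fn f) j, (fn f j).+1)) M.+1.
      apply: (@eq_from_nth _ (0,0)%N); first by rewrite hsz size_mkseq.
      move=> i; rewrite hsz => hi; rewrite nth_mkseq // hc ?hsz //.
      by rewrite (V_ext s hfa hi) hfa.
    have fB : f \in Bset.
      rewrite inE sumWf -sumV; apply/eqP.
      by rewrite -hw -/p hp weight_mkseq.
    exists f => //; apply: tuple_parts_inj; by rewrite gt_parts.
  - case=> f fB ->; rewrite gt_parts // beta_mk /=.
    move: fB; rewrite inE sumWf -sumV => /eqP <-.
    by rewrite weight_mkseq.
move=> f1 f2 h1 h2 /(congr1 (@tuple_parts n M.+1)); rewrite !gt_parts // => h.
apply/ffunP => k; apply: val_inj.
have := congr1 (fun q => (nth (0,0)%N q k).2) h; rewrite /= !nth_mkseq //= /fn inord_val.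
by case.
Qed.

End Count.
Local Open Scope ring_scope.
Definition G m K : {poly int} :=
  \sum_(f : {ffun 'I_m -> 'I_K}) 'X^(\sum_(j : 'I_m) W m j * f j).

Lemma qq2_rev m : qq2_poch m = \prod_(j < m) (1 - 'X^(W m j)).
Proof.
rewrite /qq2_poch (reindex_inj rev_ord_inj) /=; apply: eq_bigr => j _.
rewrite /W; congr (1 - 'X^_); have := ltn_ord j; lia.
Qed.

Lemma G_prod m K : G m K = \prod_(j<m) \sum_(c < K) 'X^(W m j * c).
Proof.
rewrite bigA_distr_bigA /G; apply: eq_bigr => f _; by rewrite prodrXr.
Qed.

Lemma geom (y : {poly int}) K : (1 - y) * \sum_(c<K) y^+c = 1 - y^+K.
Proof.
elim: K => [|K IH]; first by rewrite big_ord0 mulr0 expr0 subrr.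
rewrite big_ord_recr /= mulrDr IH exprS; ring.
Qed.

Lemma QG m K : qq2_poch m * G m K = \prod_(j<m) (1 - 'X^(W m j * K)).
Proof.
rewrite qq2_rev G_prod -big_split; apply: eq_bigr => j _ /=.
rewrite (eq_bigr (fun c : 'I_K => ('X^(W m j))^+c)); last by move=> c _; rewrite exprM.
by rewrite geom -exprM.
Qed.

Lemma coef_prod m K n : (n < K)%N ->
  (\prod_(j<m) (1 - 'X^(W m j * K)) : {poly int})`_n = (n == 0)%:R.
Proof.
move=> hn.
have [s ->] : exists s : {poly int}, \prod_(j<m) (1 - 'X^(W m j * K)) = 1 + 'X^K * s.
  apply: (big_ind (fun p : {poly int} => exists s, p = 1 + 'X^K * s)).
  - by exists 0; rewrite mulr0 addr0.
  - move=> x y [a ->] [b ->]; exists (a + b + 'X^K * a * b); ring.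
  - move=> j _; exists (- 'X^((W m j).-1 * K)).
    by rewrite /W /= mulSn exprD; ring.
by rewrite coefD coef1 coefXnM hn addr0.
Qed.

Lemma coefG m K j : (G m K)`_j =
  (#|[set f : {ffun 'I_m -> 'I_K} | (\sum_(i : 'I_m) W m i * f i == j)%N]|)%:R.
Proof.
rewrite /G coef_sum -sum1_card natr_sum [RHS]big_mkcond /=; apply: eq_bigr => f _.
by rewrite coefXn inE eq_sym; case: eqP.
Qed.

Lemma sq_bin m : (m ^ 2 = 2 * 'C(m, 2) + m)%N.
Proof. elim: m => [//|m IH]; rewrite binS bin1; nia. Qed.

Unset Implicit Arguments.
Set Strict Implicit.

Theorem theorem20 (r : int) (m : nat) :
  (-1 <= r)%R -> (1 <= m)%N ->
  forall N : nat,
    (\sum_(k < N.+1) (qq2_poch m)`_k * (beta_coef r m (N - k))%:Z)%R =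
    (if N%:Z == ((m ^ 2)%:Z + r * ('C(m, 2))%:Z)%R then 1 else 0)%R.
Proof.
move=> hr hm N.
have [s ->] : exists s : nat, r = s%:Z - 1.
  by exists (absz (r + 1)); lia.
case: m hm => [//|M] _.
set E := e M.+1 s.
have hE : ((M.+1 ^ 2)%:Z + (s%:Z - 1) * ('C(M.+1, 2))%:Z = E%:Z)%R.
  have := sq_bin M.+1; rewrite /E /e; lia.
rewrite hE eqz_nat.
pose B : {poly int} := \poly_(i < N.+1) (beta_coef (s%:Z - 1) M.+1 i)%:Z.
have -> : \sum_(k < N.+1) (qq2_poch M.+1)`_k * (beta_coef (s%:Z - 1) M.+1 (N - k))%:Z
    = (qq2_poch M.+1 * ('X^E * G M.+1 N.+1))`_N.
  rewrite coefM; apply: eq_bigr => k _; congr (_ * _).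
  have hk : (N - k < N.+1)%N by rewrite ltnS leq_subr.
  rewrite (count_beta s M hk) coefXnM coefG.
  case: ltnP => hlt.
    congr Posz; apply: eq_card0 => f; rewrite /Bset !inE.
    apply/negbTE; apply/eqP; lia.
  rewrite natz; congr Posz; apply: eq_card => f; rewrite /Bset !inE; apply/eqP/eqP; lia.
rewrite mulrCA coefXnM QG.
case: ltnP => hNE.
  by case: eqP => // h; lia.
rewrite coef_prod; last by lia.
by case: eqP; case: eqP => //; lia.
Qed.
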